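(* There exist uncountably many W-subshifts $X \subset \{0,1\}^{\mathbb Z}$ which are neither sofic nor strongly irreducible.
   Context: A subshift of $A^{\mathbb Z}$ is a closed shift-invariant subset, with shift $(gx)(h)=x(h-g)$. $X$ is of finite type if there are finite $\Omega\subset\mathbb Z$ and $\mathcal P\subset A^\Omega$ with $X=\{x:(gx)|_\Omega\in\mathcal P\ \forall g\}$; $X$ is sofic if it is the image of a subshift of finite type $Y\subset B^{\mathbb Z}$ ($B$ finite) under a surjective continuous shift-equivariant map. $X$ is strongly irreducible if there is finite $\Delta\subset\mathbb Z$ such that for all finite $\Omega_1,\Omega_2$ with $(\Omega_1-\Delta)\cap\Omega_2=\varnothing$ and all $x_1,x_2\in X$ there is $x\in X$ agreeing with $x_1$ on $\Omega_1$ and with $x_2$ on $\Omega_2$. $L(X)$ is the set of finite words (including the empty word) appearing as $x(i)\cdots x(j)$ in some $x\in X$. $X$ is a W-subshift if there is an integer $n_0\ge0$ such that for all $u,v\in L(X)$ there is $c\in L(X)$ with $|c|\le n_0$ and $ucv\in L(X)$. *)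

(* Defs.v *)
From Stdlib Require Import ZArith List.
Import ListNotations.
Open Scope Z_scope.

Definition shift {A : Type} (g : Z) (x : Z -> A) : Z -> A := fun h => x (h - g).

(* Closed in the product topology (A finite, discrete): a configuration all of whose
   central windows [-n,n] are seen in elements of X belongs to X. *)
Definition closed_set {A : Type} (X : (Z -> A) -> Prop) : Prop :=
  forall x : Z -> A,
    (forall n : nat, exists y, X y /\
        forall i, - Z.of_nat n <= i <= Z.of_nat n -> y i = x i) ->
    X x.

Definition shift_invariant {A : Type} (X : (Z -> A) -> Prop) : Prop :=
  forall (g : Z) (x : Z -> A), X x -> X (shift g x).

Definition subshift {A : Type} (X : (Z -> A) -> Prop) : Prop :=
  closed_set X /\ shift_invariant X.

Definition finite_type (B : Type) : Prop := exists l : list B, forall b, In b l.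

(* Finite type: finite Omega (a list) and P a set of patterns on Omega
   (a pattern on Omega = list of values indexed along Omega). *)
Definition finite_type_subshift {B : Type} (Y : (Z -> B) -> Prop) : Prop :=
  exists (Om : list Z) (P : list B -> Prop),
    forall y : Z -> B, Y y <-> (forall g : Z, P (map (shift g y) Om)).

Definition sofic {A : Type} (X : (Z -> A) -> Prop) : Prop :=
  exists (B : Type) (Y : (Z -> B) -> Prop) (phi : (Z -> B) -> (Z -> A)),
    finite_type B /\
    finite_type_subshift Y /\
    (forall x, X x <-> exists y, Y y /\ forall i, phi y i = x i) /\
    (forall (g : Z) y, Y y -> forall i, phi (shift g y) i = shift g (phi y) i) /\
    (forall y, Y y -> forall n : nat, exists m : nat, forall y', Y y' ->
        (forall i, - Z.of_nat m <= i <= Z.of_nat m -> y' i = y i) ->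
        forall i, - Z.of_nat n <= i <= Z.of_nat n -> phi y' i = phi y i).

Definition strongly_irreducible {A : Type} (X : (Z -> A) -> Prop) : Prop :=
  exists Delta : list Z,
    forall Om1 Om2 : list Z,
      (forall a d, In a Om1 -> In d Delta -> ~ In (a - d) Om2) ->
      forall x1 x2, X x1 -> X x2 ->
        exists x, X x /\ (forall i, In i Om1 -> x i = x1 i)
                      /\ (forall i, In i Om2 -> x i = x2 i).

Definition in_language {A : Type} (X : (Z -> A) -> Prop) (w : list A) : Prop :=
  w = [] \/
  exists (x : Z -> A) (i : Z), X x /\
    forall (k : nat) (d : A), (k < length w)%nat -> nth k w d = x (i + Z.of_nat k).

Definition W_subshift {A : Type} (X : (Z -> A) -> Prop) : Prop :=
  subshift X /\
  exists n0 : nat, forall u v : list A,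
    in_language X u -> in_language X v ->
    exists c : list A, in_language X c /\ (length c <= n0)%nat /\
                       in_language X (u ++ c ++ v).

(* Main.v *)
From Stdlib Require Import ZArith List Lia Classical ClassicalEpsilon Bool.
Require Import Defs.
Import ListNotations.
Open Scope Z_scope.

Ltac zl := Z.div_mod_to_equations; lia.

Definition Sg (T : nat -> bool) (g : Z) : Prop :=
  (exists s, 0 <= s /\ g = 6*s+1) \/
  (exists n:nat, T n = true /\ g = 6 * Z.of_nat n * Z.of_nat n + 3).

Definition XT (T : nat -> bool) (x : Z -> bool) : Prop :=
  forall i j, i < j -> x i = true -> x j = true ->
    (forall k, i < k < j -> x k = false) -> Sg T (j - i - 1).

Definition xg (g : Z) : Z -> bool := fun i => (i =? 0) || (i =? g+1).

Lemma Sg_odd T g : Sg T g -> 0 <= g /\ g mod 2 = 1.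
Proof. intros [[s [Hs ->]]|[n [_ ->]]]. zl.
  set (m := Z.of_nat n * Z.of_nat n). replace (6 * Z.of_nat n * Z.of_nat n) with (6*m) by (unfold m; ring).
  assert (0 <= m) by (unfold m; nia). zl. Qed.

Lemma XT_xg T g : 0 <= g -> (XT T (xg g) <-> Sg T g).
Proof.
  intro Hg; split.
  - intro H. replace g with ((g+1) - 0 - 1) by lia. apply H; unfold xg.
    + lia.
    + reflexivity.
    + rewrite (Z.eqb_refl (g+1)), orb_true_r; reflexivity.
    + intros k Hk. destruct (Z.eqb_spec k 0); destruct (Z.eqb_spec k (g+1)); try lia; reflexivity.
  - intros H i j Hij Hi Hj _. unfold xg in *.
    destruct (Z.eqb_spec i 0); destruct (Z.eqb_spec i (g+1));
    destruct (Z.eqb_spec j 0); destruct (Z.eqb_spec j (g+1)); simpl in *; try discriminate; try lia.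
    replace (j - i - 1) with g by lia. exact H.
Qed.

Lemma Sg_diag T (k : nat) : Sg T (6 * Z.of_nat k * Z.of_nat k + 3) <-> T k = true.
Proof.
  split.
  - intros [[s [Hs E]]|[n [Hn E]]]. exfalso.
    set (m := Z.of_nat k * Z.of_nat k) in *. replace (6 * Z.of_nat k * Z.of_nat k) with (6*m) in E by (unfold m; ring). zl.
    assert (n = k).
    { destruct (Nat.lt_total n k) as [H|[H|H]]; auto; nia. }
    subst; auto.
  - intro H; right; exists k; auto.
Qed.

Lemma first_one (x : Z -> bool) : forall (n : nat) i j, j - i <= Z.of_nat n -> i < j -> x j = true ->
  exists q, i < q <= j /\ x q = true /\ forall k, i < k < q -> x k = false.
Proof.
  induction n; intros i j Hn Hij Hj. lia.
  destruct (classic (exists k, i < k < j /\ x k = true)) as [[k [Hk Hxk]]|Hno].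
  - destruct (IHn i k) as [q Hq]; try lia; auto. exists q; intuition lia.
  - exists j; repeat split; auto; try lia.
    intros k Hk. destruct (x k) eqn:E; auto. exfalso; apply Hno; eauto.
Qed.

Lemma last_one (x : Z -> bool) : forall (n : nat) q a, a - q <= Z.of_nat n -> q < a -> x q = true ->
  exists q', q <= q' < a /\ x q' = true /\ forall k, q' < k < a -> x k = false.
Proof.
  induction n; intros q a Hn Hq Hx. lia.
  destruct (classic (exists k, q < k < a /\ x k = true)) as [[k [Hk Hxk]]|Hno].
  - destruct (IHn k a) as [q' Hq']; try lia; auto. exists q'; intuition lia.
  - exists q; repeat split; auto; try lia.
    intros k Hk. destruct (x k) eqn:E; auto. exfalso; apply Hno; eauto.
Qed.

Lemma XT_parity T x : XT T x -> forall (n : nat) i j, j - i <= Z.of_nat n -> i < j ->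
  x i = true -> x j = true -> (j - i) mod 2 = 0.
Proof.
  intros HX n; induction n; intros i j Hn Hij Hi Hj. lia.
  destruct (first_one x (S n) i j) as [q [Hq [Hxq Hz]]]; auto.
  pose proof (Sg_odd _ _ (HX i q ltac:(lia) Hi Hxq Hz)).
  destruct (Z.eq_dec q j). subst; zl.
  pose proof (IHn q j ltac:(lia) ltac:(lia) Hxq Hj). zl.
Qed.

Lemma XT_subshift T : subshift (XT T).
Proof.
  split.
  - intros x Hx i j Hij Hi Hj Hz.
    destruct (Hx (Z.to_nat (Z.abs i + Z.abs j))) as [y [Hy Hag]].
    apply Hy; auto.
    + rewrite Hag; auto; lia.
    + rewrite Hag; auto; lia.
    + intros k Hk; rewrite Hag; [apply Hz; auto|lia].
  - intros g x Hx i j Hij Hi Hj Hz. unfold shift in *.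
    replace (j - i - 1) with ((j - g) - (i - g) - 1) by lia.
    apply Hx; auto; try lia.
    intros k Hk. replace k with ((k + g) - g) by lia. apply Hz; lia.
Qed.

Definition sumabs (L : list Z) : Z := fold_right (fun o a => Z.abs o + a) 0 L.
Lemma sumabs_nonneg L : 0 <= sumabs L.
Proof. induction L; simpl; lia. Qed.

Lemma sumabs_bound L o : In o L -> Z.abs o <= sumabs L.
Proof.
  assert (forall L, 0 <= sumabs L) as H0.
  { induction L0; simpl; lia. }
  induction L; simpl. tauto. intros [->|H]. specialize (H0 L); lia.
  specialize (IHL H); lia.
Qed.

Lemma XT_notSI T : ~ strongly_irreducible (XT T).
Proof.
  intros [Delta HD].
  set (p := 2 * sumabs Delta + 1).
  pose proof (sumabs_nonneg Delta).
  destruct (HD [0] [p]) with (x1 := fun t => t =? 0) (x2 := fun t => t =? p)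
    as [x [Hx [H1 H2]]].
  - intros a d [<-|[]] Hd [E|[]]. pose proof (sumabs_bound _ _ Hd). unfold p in E; lia.
  - intros i j Hij Hi Hj _. apply Z.eqb_eq in Hi, Hj; lia.
  - intros i j Hij Hi Hj _. apply Z.eqb_eq in Hi, Hj; lia.
  - specialize (H1 0 ltac:(simpl; auto)). specialize (H2 p ltac:(simpl; auto)).
    rewrite Z.eqb_refl in H1, H2.
    pose proof (XT_parity T x Hx (Z.to_nat p) 0 p ltac:(lia) ltac:(lia) H1 H2).
    unfold p in *. zl.
Qed.

Lemma nth_c (r t j : nat) d : (j < r + 1 + t)%nat ->
  nth j (repeat false r ++ true :: repeat false t) d = (j =? r)%nat.
Proof.
  intro H. destruct (Nat.lt_ge_cases j r).
  - rewrite app_nth1 by (rewrite repeat_length; auto). rewrite nth_repeat_lt by auto.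
    symmetry; apply Nat.eqb_neq; lia.
  - rewrite app_nth2 by (rewrite repeat_length; auto). rewrite repeat_length.
    destruct (j - r)%nat eqn:E. simpl. symmetry; apply Nat.eqb_eq; lia.
    simpl. rewrite nth_repeat_lt by lia. symmetry; apply Nat.eqb_neq; lia.
Qed.

Section Glue.
Variable T : nat -> bool.
Variables (x1 x2 : Z -> bool) (i1 i2 a r t : Z).
Hypotheses (Hx1 : XT T x1) (Hx2 : XT T x2) (Hr : 0 <= r) (Ht : 0 <= t) (Ha : 0 <= a).
Hypothesis Pr : forall q, q < a -> x1 (q+i1) = true -> (forall k, q<k<a -> x1 (k+i1) = false) ->
  Sg T (a + r - q - 1).
Hypothesis Pt : forall q, 0 <= q -> x2 (q+i2) = true -> (forall k, 0 <= k < q -> x2 (k+i2) = false) ->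
  Sg T (t + q).

Definition zg : Z -> bool := fun s =>
  if s <? a then x1 (s+i1) else if s =? a + r then true
  else if s <? a+r+1+t then false else x2 (s - (a+r+1+t) + i2).

Lemma zg_left s : s < a -> zg s = x1 (s+i1).
Proof. intro; unfold zg. destruct (Z.ltb_spec s a); [auto|lia]. Qed.
Lemma zg_mid s : a <= s < a+r+1+t -> zg s = (s =? a + r).
Proof. intro; unfold zg. destruct (Z.ltb_spec s a); [lia|].
  destruct (Z.eqb_spec s (a+r)); auto. destruct (Z.ltb_spec s (a+r+1+t)); [auto|lia]. Qed.
Lemma zg_right s : a+r+1+t <= s -> zg s = x2 (s - (a+r+1+t) + i2).
Proof. intro; unfold zg. destruct (Z.ltb_spec s a); [lia|].
  destruct (Z.eqb_spec s (a+r)); [lia|]. destruct (Z.ltb_spec s (a+r+1+t)); [lia|auto]. Qed.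

Lemma zg_XT : XT T zg.
Proof.
  intros i j Hij Hi Hj Hz.
  destruct (Z_lt_ge_dec j a).
  - rewrite zg_left in Hi, Hj by lia.
    replace (j - i - 1) with ((j+i1) - (i+i1) - 1) by lia.
    apply Hx1; auto; try lia. intros k Hk. replace k with ((k - i1) + i1) by lia.
    rewrite <- zg_left by lia. apply Hz; lia.
  - destruct (Z_lt_ge_dec i (a+r+1+t)).
    + destruct (Z_lt_ge_dec i a).
      *
        assert (j = a + r).
        { destruct (Z_lt_ge_dec j (a+r+1+t)).
          - rewrite zg_mid in Hj by lia. apply Z.eqb_eq in Hj; auto.
          - exfalso. specialize (Hz (a+r) ltac:(lia)). rewrite zg_mid in Hz by lia.
            rewrite Z.eqb_refl in Hz; discriminate. }
        subst j. rewrite zg_left in Hi by lia. apply Pr; auto.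
        intros k Hk. rewrite <- zg_left by lia. apply Hz; lia.
      * rewrite zg_mid in Hi by lia. apply Z.eqb_eq in Hi. subst i.
        assert (a+r+1+t <= j).
        { destruct (Z_lt_ge_dec j (a+r+1+t)); [|lia]. rewrite zg_mid in Hj by lia.
          apply Z.eqb_eq in Hj; lia. }
        rewrite zg_right in Hj by lia.
        replace (j - (a+r) - 1) with (t + (j - (a+r+1+t))) by lia.
        apply Pt; auto; try lia. intros k Hk.
        replace (k + i2) with ((k + (a+r+1+t)) - (a+r+1+t) + i2) by lia.
        rewrite <- zg_right by lia. apply Hz; lia.
    + rewrite zg_right in Hi, Hj by lia.
      replace (j - i - 1) with ((j - (a+r+1+t) + i2) - (i - (a+r+1+t) + i2) - 1) by lia.
      apply Hx2; auto; try lia. intros k Hk.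
      replace k with ((k - i2 + (a+r+1+t)) - (a+r+1+t) + i2) by lia.
      rewrite <- zg_right by lia. apply Hz; lia.
Qed.
End Glue.

Lemma XT_W T : W_subshift (XT T).
Proof.
  split. apply XT_subshift.
  exists 11%nat. intros u v Hu Hv.
  assert (Hnil : in_language (XT T) []) by (left; auto).
  destruct Hu as [->|[x1 [i1 [Hx1 Hu]]]].
  { exists []; repeat split; auto. simpl; lia. }
  destruct Hv as [->|[x2 [i2 [Hx2 Hv]]]].
  { exists []; repeat split; auto. simpl; lia. rewrite !app_nil_r. right; eauto. }
  set (a := Z.of_nat (length u)).
  assert (exists r, 0 <= r <= 5 /\ forall q, q < a -> x1 (q+i1) = true ->
     (forall k, q<k<a -> x1 (k+i1) = false) -> Sg T (a + r - q - 1)) as [r [Hr Pr]].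
  { destruct (classic (exists q, q < a /\ x1 (q + i1) = true)) as [[q0 [Hq0 Hxq0]]|Hno].
    - destruct (last_one (fun s => x1 (s + i1)) (Z.to_nat (a - q0)) q0 a ltac:(lia) Hq0 Hxq0)
        as [q1 [Hq1 [Hx1q Hz1]]].
      exists ((2 - a + q1) mod 6). split. zl.
      intros q Hq Hxq Hz.
      assert (q = q1).
      { destruct (Z.lt_total q q1) as [H|[H|H]]; auto.
        - rewrite Hz in Hx1q by lia; discriminate.
        - rewrite Hz1 in Hxq by lia; discriminate. }
      subst q. left. exists ((a + (2 - a + q1) mod 6 - q1 - 1) / 6). zl.
    - exists 0. split. lia. intros q Hq Hxq. exfalso; eauto. }
  assert (exists t, 0 <= t <= 5 /\ forall q, 0 <= q -> x2 (q+i2) = true ->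
     (forall k, 0 <= k < q -> x2 (k+i2) = false) -> Sg T (t + q)) as [t [Ht Pt]].
  { destruct (classic (exists q, 0 <= q /\ x2 (q + i2) = true)) as [[q0 [Hq0 Hxq0]]|Hno].
    - destruct (first_one (fun s => x2 (s + i2)) (Z.to_nat (q0 + 1)) (-1) q0 ltac:(lia) ltac:(lia) Hxq0)
        as [q1 [Hq1 [Hx1q Hz1]]].
      exists ((1 - q1) mod 6). split. zl.
      intros q Hq Hxq Hz.
      assert (q = q1).
      { destruct (Z.lt_total q q1) as [H|[H|H]]; auto.
        - rewrite Hz1 in Hxq by lia; discriminate.
        - rewrite Hz in Hx1q by lia; discriminate. }
      subst q. left. exists (((1 - q1) mod 6 + q1) / 6). zl.
    - exists 0. split. lia. intros q Hq Hxq. exfalso; eauto. }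
  set (c := repeat false (Z.to_nat r) ++ true :: repeat false (Z.to_nat t)).
  assert (Hlc : length c = (Z.to_nat r + 1 + Z.to_nat t)%nat).
  { unfold c; rewrite length_app; simpl; rewrite !repeat_length; lia. }
  exists c. split; [|split].
  - right. exists (fun s => s =? r), 0. split.
    + intros i j Hij Hi Hj _. apply Z.eqb_eq in Hi, Hj; lia.
    + intros k d Hk. unfold c. rewrite nth_c by lia.
      destruct (Nat.eqb_spec k (Z.to_nat r)); destruct (Z.eqb_spec (0 + Z.of_nat k) r); auto; lia.
  - lia.
  - right. exists (zg x1 x2 i1 i2 a r t), 0. split.
    + apply zg_XT; auto; lia.
    + intros k d Hk. rewrite !length_app in Hk.
      destruct (Nat.lt_ge_cases k (length u)).
      * rewrite app_nth1 by auto. rewrite Hu by auto. rewrite zg_left by lia. f_equal; lia.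
      * rewrite app_nth2 by auto.
        destruct (Nat.lt_ge_cases (k - length u) (length c)).
        -- rewrite app_nth1 by auto. unfold c. rewrite nth_c by lia.
           rewrite zg_mid by lia.
           destruct (Nat.eqb_spec (k - length u) (Z.to_nat r)); destruct (Z.eqb_spec (0 + Z.of_nat k) (a+r)); auto; lia.
        -- rewrite app_nth2 by auto. rewrite Hv by lia. rewrite zg_right by lia. f_equal; lia.
Qed.

Fixpoint all_lists {C} (l : list C) (n : nat) : list (list C) :=
  match n with
  | O => [[]]
  | S n => flat_map (fun b => map (cons b) (all_lists l n)) l
  end.

Lemma all_lists_length {C} (l : list C) n : length (all_lists l n) = (length l ^ n)%nat.
Proof.
  induction n; simpl; auto.
  rewrite <- IHn. clear IHn. generalize (all_lists l n) as A. intro A. induction l as [|b l' IH]; simpl; auto.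
  rewrite length_app, length_map, IH. reflexivity.
Qed.

Lemma all_lists_in {C} (l : list C) (Hl : forall c, In c l) : forall w, In w (all_lists l (length w)).
Proof.
  induction w; simpl; auto. apply in_flat_map. exists a; split; auto. apply in_map; auto.
Qed.

Lemma nodup_seq {C} (f : nat -> C) : forall n a,
  (forall i j, (a <= i < j)%nat -> (j < a + n)%nat -> f i <> f j) -> NoDup (map f (seq a n)).
Proof.
  induction n; intros a H; simpl. constructor.
  constructor.
  - intro Hin. apply in_map_iff in Hin as [x [Hx Hin]]. apply in_seq in Hin.
    apply (H a x); auto; lia.
  - apply IHn. intros i j Hij Hj. apply H; lia.
Qed.

Lemma pigeon {C} (l : list C) (Hl : forall c, In c l) (L : nat) (f : nat -> list C) :
  (forall k, length (f k) = L) ->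
  exists i j, (i < j <= length l ^ L)%nat /\ f i = f j.
Proof.
  intro HL. apply NNPP; intro Hno.
  assert (NoDup (map f (seq 0 (S (length l ^ L))))).
  { apply nodup_seq. intros i j Hij Hj E. apply Hno. exists i, j; split; auto; lia. }
  apply (NoDup_incl_length (l' := all_lists l L)) in H.
  - rewrite length_map, length_seq, all_lists_length in H. lia.
  - intros w Hw. apply in_map_iff in Hw as [k [<- _]]. rewrite <- (HL k). apply all_lists_in; auto.
Qed.

Lemma map_eq_in {C D} (F G : C -> D) : forall hs h, map F hs = map G hs -> In h hs -> F h = G h.
Proof.
  induction hs; simpl; intros h E Hin. tauto.
  injection E as E1 E2. destruct Hin as [<-|Hin]; auto.
Qed.

Lemma bound_list {C} (L : list C) (F : C -> nat -> Prop) :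
  (forall c, In c L -> exists k, forall m, (k <= m)%nat -> F c m) ->
  exists K, forall c, In c L -> forall m, (K <= m)%nat -> F c m.
Proof.
  induction L; intros H. exists 0%nat; simpl; tauto.
  destruct (H a (or_introl eq_refl)) as [k Hk].
  destruct IHL as [K HK]. { intros c Hc; apply H; simpl; auto. }
  exists (Nat.max k K). intros c [<-|Hc] m Hm. apply Hk; lia. apply HK; auto; lia.
Qed.

Section Sof.
Variables (B : Type) (Y : (Z->B)->Prop) (phi : (Z->B)->(Z->bool)) (l : list B) (Om : list Z)
  (P : list B -> Prop).
Hypotheses (Hl : forall b, In b l) (HY : forall y, Y y <-> forall g, P (map (shift g y) Om))
 (Heq : forall g y, Y y -> forall i, phi (shift g y) i = shift g (phi y) i)
 (Hcont : forall y, Y y -> forall n:nat, exists m:nat, forall y', Y y' ->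
   (forall i, -Z.of_nat m <= i <= Z.of_nat m -> y' i = y i) ->
   forall i, - Z.of_nat n <= i <= Z.of_nat n -> phi y' i = phi y i).

Lemma Y_local y z : Y y -> (forall i, exists c, forall h, Z.abs h <= sumabs Om -> z (i+h) = y (c+h)) -> Y z.
Proof.
  intros Hy Hz. rewrite HY in *. intro g. destruct (Hz (-g)) as [c Hc].
  replace (map (shift g z) Om) with (map (shift (-c) y) Om). apply Hy.
  apply map_ext_in. intros o Ho. unfold shift. pose proof (sumabs_bound _ _ Ho).
  replace (o - g) with (-g + o) by lia. rewrite Hc by auto. f_equal; lia.
Qed.

Lemma Y_shift g y : Y y -> Y (shift g y).
Proof.
  intro Hy. apply (Y_local y); auto. intros i. exists (i - g). intros h _. unfold shift. f_equal; lia.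
Qed.

Section Kon.
Variables (ya : nat -> Z -> B).
Hypothesis Hya : forall m, Y (ya m).

Definition good (n : nat) (w : Z -> B) := forall k, exists m, (k <= m)%nat /\
  forall i, Z.abs i < Z.of_nat n -> ya m i = w i.

Definition ext (n : nat) (w : Z -> B) (b : B * B) : Z -> B := fun i =>
  if i =? - Z.of_nat n then fst b else if i =? Z.of_nat n then snd b else w i.

Lemma good_step n w : good n w -> {w' | good (S n) w' /\ forall i, Z.abs i < Z.of_nat n -> w' i = w i}.
Proof.
  intro Hg. apply constructive_indefinite_description.
  apply NNPP; intro Hno.
  destruct (bound_list (list_prod l l) (fun b m => ~ forall i, Z.abs i < Z.of_nat (S n) -> ya m i = ext n w b i))
    as [K HK].
  { intros b _. apply NNPP; intro H2. apply Hno. exists (ext n w b). split.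
    - intro k. apply NNPP; intro H3. apply H2. exists k. intros m Hm H4. apply H3. eauto.
    - intros i Hi. unfold ext. destruct (Z.eqb_spec i (- Z.of_nat n)); [lia|].
      destruct (Z.eqb_spec i (Z.of_nat n)); [lia|auto]. }
  destruct (Hg K) as [m [Hm Hag]].
  apply (HK (ya m (- Z.of_nat n), ya m (Z.of_nat n))) with m; auto.
  - apply in_prod; auto.
  - intros i Hi. unfold ext; simpl. destruct (Z.eqb_spec i (- Z.of_nat n)). subst; auto.
    destruct (Z.eqb_spec i (Z.of_nat n)). subst; auto. apply Hag; lia.
Qed.

Lemma good0 : good 0 (ya 0).
Proof. intro k. exists k. split; auto. intros i Hi; lia. Qed.

Fixpoint seqw (n : nat) : {w | good n w} :=
  match n with
  | O => exist _ (ya 0) good0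
  | S n' => let (w, Hw) := seqw n' in exist _ (proj1_sig (good_step n' w Hw)) (proj1 (proj2_sig (good_step n' w Hw)))
  end.

Lemma seqw_coh : forall k n i, Z.abs i < Z.of_nat n -> proj1_sig (seqw (k + n)) i = proj1_sig (seqw n) i.
Proof.
  induction k; intros n i Hi; simpl; auto.
  destruct (seqw (k + n)) as [w Hw] eqn:E. simpl.
  destruct (good_step (k+n) w Hw) as [w' [Hw' Hag]]. simpl. rewrite Hag by lia.
  rewrite <- (IHk n i Hi). rewrite E. reflexivity.
Qed.

Definition ystar (i : Z) : B := proj1_sig (seqw (S (Z.to_nat (Z.abs i)))) i.

Lemma ystar_good n : good n ystar.
Proof.
  intro k. destruct (proj2_sig (seqw n) k) as [m [Hm Hag]]. exists m. split; auto.
  intros i Hi. rewrite Hag by auto. unfold ystar.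
  destruct (Nat.le_ge_cases n (S (Z.to_nat (Z.abs i)))).
  - replace (S (Z.to_nat (Z.abs i))) with ((S (Z.to_nat (Z.abs i)) - n) + n)%nat by lia.
    rewrite seqw_coh by lia. reflexivity.
  - replace n with ((n - S (Z.to_nat (Z.abs i))) + S (Z.to_nat (Z.abs i)))%nat by lia.
    rewrite seqw_coh by lia. reflexivity.
Qed.

Lemma ystar_Y : Y ystar.
Proof.
  apply HY. intro g.
  destruct (ystar_good (Z.to_nat (Z.abs g + sumabs Om + 1)) 0%nat) as [m [_ Hag]].
  replace (map (shift g ystar) Om) with (map (shift g (ya m)) Om).
  - apply HY; auto.
  - apply map_ext_in. intros o Ho. unfold shift. pose proof (sumabs_bound _ _ Ho).
    apply Hag. lia.
Qed.
End Kon.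

Lemma ucont : exists m : nat, forall y y', Y y -> Y y' ->
  (forall i, - Z.of_nat m <= i <= Z.of_nat m -> y' i = y i) -> phi y' 0 = phi y 0.
Proof.
  apply NNPP; intro Hno.
  assert (H : forall m : nat, exists p : (Z -> B) * (Z -> B), Y (fst p) /\ Y (snd p) /\
    (forall i, - Z.of_nat m <= i <= Z.of_nat m -> snd p i = fst p i) /\ phi (snd p) 0 <> phi (fst p) 0).
  { intro m. apply NNPP; intro H. apply Hno. exists m. intros y y' Hy Hy' Hag.
    apply NNPP; intro Hne. apply H. exists (y, y'); simpl; auto. }
  set (pr := fun m => proj1_sig (constructive_indefinite_description _ (H m))).
  assert (Hpr : forall m, Y (fst (pr m)) /\ Y (snd (pr m)) /\
    (forall i, - Z.of_nat m <= i <= Z.of_nat m -> snd (pr m) i = fst (pr m) i) /\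
    phi (snd (pr m)) 0 <> phi (fst (pr m)) 0).
  { intro m. unfold pr. destruct (constructive_indefinite_description _ (H m)); auto. }
  set (ya := fun m => fst (pr m)).
  assert (Hya : forall m, Y (ya m)) by (intro m; apply Hpr).
  pose proof (ystar_Y ya Hya) as HYs.
  destruct (Hcont _ HYs 0%nat) as [ms Hms].
  destruct (ystar_good ya (S ms) ms) as [m [Hm Hag]].
  destruct (Hpr m) as [H1 [H2 [H3 H4]]]. apply H4.
  transitivity (phi (ystar ya) 0).
  - apply Hms; auto; try lia. intros i Hi. rewrite H3 by lia. apply Hag; lia.
  - symmetry. apply Hms; auto; try lia. intros i Hi. apply Hag; lia.
Qed.

Lemma phi_local (m : nat) (Hm : forall y y', Y y -> Y y' ->
  (forall i, - Z.of_nat m <= i <= Z.of_nat m -> y' i = y i) -> phi y' 0 = phi y 0)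
  y y' j c : Y y -> Y y' -> (forall h, Z.abs h <= Z.of_nat m -> y' (j+h) = y (c+h)) -> phi y' j = phi y c.
Proof.
  intros Hy Hy' H.
  assert (E1 : phi y' j = phi (shift (-j) y') 0) by (rewrite Heq by auto; unfold shift; f_equal; lia).
  assert (E2 : phi y c = phi (shift (-c) y) 0) by (rewrite Heq by auto; unfold shift; f_equal; lia).
  rewrite E1, E2. apply Hm; try apply Y_shift; auto.
  intros i Hi. unfold shift. replace (i - - j) with (j + i) by lia. replace (i - - c) with (c + i) by lia.
  apply H; lia.
Qed.

Variable X : (Z -> bool) -> Prop.
Hypothesis HX : forall x, X x <-> exists y, Y y /\ forall i, phi y i = x i.

Lemma pump : exists N, 1 <= N /\ forall g, N <= g -> X (xg g) ->
  exists d, 1 <= d <= N /\ X (xg (g-d)) /\ X (xg (g+d)).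
Proof.
  destruct ucont as [m Hm].
  set (R := Z.max (Z.of_nat m) (sumabs Om)).
  pose proof (sumabs_nonneg Om).
  set (L := Z.to_nat (4*R+1)).
  set (Np := Z.of_nat (length l ^ L)).
  exists (3*Np + R + 3). split. lia.
  intros g Hg HXg. apply HX in HXg as [y [Yy Hy]].
  set (hs := map (fun t => Z.of_nat t - 2*R) (seq 0 L)).
  destruct (pigeon l Hl L (fun k => map (fun h => y (Z.of_nat k + 1 + h)) hs)) as [i [j [Hij E]]].
  { intro k. unfold hs. rewrite !length_map, length_seq. auto. }
  set (p := Z.of_nat i + 1). set (d := Z.of_nat j - Z.of_nat i).
  assert (Hag : forall h, Z.abs h <= 2*R -> y (p+h) = y (p+d+h)).
  { intros h Hh. pose proof (map_eq_in _ _ hs h E) as E'. simpl in E'.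
    unfold p, d. replace (Z.of_nat i + 1 + h) with (Z.of_nat i + 1 + h) by lia.
    rewrite E'. f_equal; lia.
    unfold hs. apply in_map_iff. exists (Z.to_nat (h + 2*R)). split. lia.
    apply in_seq. unfold L. lia. }
  assert (HjN : Z.of_nat j <= Np) by (unfold Np; lia).
  exists d. split. unfold d; lia. split.
  -
    set (y0 := fun s => if s <? p then y s else y (s + d)).
    assert (Hloc : forall i0, exists c, (forall h, Z.abs h <= R -> y0 (i0+h) = y (c+h)) /\
       xg g c = xg (g-d) i0).
    { intro i0. destruct (Z_le_gt_dec i0 (p+R)).
      - exists i0. split.
        + intros h Hh. unfold y0. destruct (Z.ltb_spec (i0+h) p); auto.
          transitivity (y (p+d+(i0+h-p))). f_equal; lia. rewrite <- Hag by lia. f_equal; lia.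
        + unfold xg; repeat match goal with |- context[?a =? ?b] => destruct (Z.eqb_spec a b) end; simpl; auto; unfold p, d in *; lia.
      - exists (i0 + d). split.
        + intros h Hh. unfold y0. destruct (Z.ltb_spec (i0+h) p); [unfold p in *; lia|]. f_equal; lia.
        + unfold xg; repeat match goal with |- context[?a =? ?b] => destruct (Z.eqb_spec a b) end; simpl; auto; unfold p, d in *; lia.
          }
    assert (HY0 : Y y0).
    { apply (Y_local y); auto. intro i0. destruct (Hloc i0) as [c [Hc _]]. exists c.
      intros h Hh. apply Hc. lia. }
    apply HX. exists y0. split; auto. intro i0. destruct (Hloc i0) as [c [Hc Hx]].
    rewrite (phi_local m Hm y y0 i0 c); auto. rewrite Hy; auto.
    intros h Hh. apply Hc. lia.
  -
    set (y2 := fun s => if s <? p + d then y s else y (s - d)).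
    assert (Hloc : forall i0, exists c, (forall h, Z.abs h <= R -> y2 (i0+h) = y (c+h)) /\
       xg g c = xg (g+d) i0).
    { intro i0. destruct (Z_le_gt_dec i0 (p+d+R)).
      - exists i0. split.
        + intros h Hh. unfold y2. destruct (Z.ltb_spec (i0+h) (p+d)); auto.
          transitivity (y (p+(i0+h-d-p))). f_equal; lia. rewrite Hag by lia. f_equal; lia.
        + unfold xg; repeat match goal with |- context[?a =? ?b] => destruct (Z.eqb_spec a b) end; simpl; auto; unfold p, d in *; lia.
      - exists (i0 - d). split.
        + intros h Hh. unfold y2. destruct (Z.ltb_spec (i0+h) (p+d)); [unfold p in *; lia|]. f_equal; lia.
        + unfold xg; repeat match goal with |- context[?a =? ?b] => destruct (Z.eqb_spec a b) end; simpl; auto; unfold p, d in *; lia.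
          }
    assert (HY2 : Y y2).
    { apply (Y_local y); auto. intro i0. destruct (Hloc i0) as [c [Hc _]]. exists c.
      intros h Hh. apply Hc. lia. }
    apply HX. exists y2. split; auto. intro i0. destruct (Hloc i0) as [c [Hc Hx]].
    rewrite (phi_local m Hm y y2 i0 c); auto. rewrite Hy; auto.
    intros h Hh. apply Hc. lia.
Qed.

End Sof.

Lemma sq_gap (n n2 N d : Z) : 0 <= n -> 0 <= n2 -> N <= n -> 1 <= d <= N ->
  6*n*n+3+d = 6*n2*n2+3 -> False.
Proof.
  intros. destruct (Z_le_gt_dec n2 n).
  - assert (n2*n2 <= n*n) by nia. lia.
  - assert (n2*n2 >= n*n+2*n+1) by nia. lia.
Qed.

Lemma XT_notsofic T (Hinf : forall M, exists n:nat, (M <= n)%nat /\ T n = true) : ~ sofic (XT T).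
Proof.
  intros [B [Y [phi [[l Hl] [[Om [P HY]] [HX [Heq Hc]]]]]]].
  destruct (pump B Y phi l Om P Hl HY Heq Hc (XT T) HX) as [N [HN Hp]].
  destruct (Hinf (Z.to_nat N)) as [n [Hn Tn]].
  set (g := 6 * Z.of_nat n * Z.of_nat n + 3).
  assert (HgN : N <= g) by (unfold g; nia).
  assert (Hg : XT T (xg g)) by (apply XT_xg; [unfold g; nia|]; apply Sg_diag; auto).
  destruct (Hp g HgN Hg) as [d [Hd [H1 H2]]].
  apply XT_xg in H1; [|lia]. apply XT_xg in H2; [|lia].
  set (a := Z.of_nat n * Z.of_nat n) in *.
  assert (Ea : g = 6*a + 3) by (unfold g, a; ring).
  destruct H2 as [[s [Hs E]]|[n2 [_ E]]].
  - destruct H1 as [[s' [Hs' E']]|[n3 [_ E']]].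
    + zl.
    + set (b := Z.of_nat n3 * Z.of_nat n3) in *.
      assert (E'' : g - d = 6*b+3) by (rewrite E'; unfold b; ring). zl.
  - apply (sq_gap (Z.of_nat n) (Z.of_nat n2) N d); try lia.

Qed.

Theorem proposition4p8 :
  ~ exists e : nat -> ((Z -> bool) -> Prop),
      forall X : (Z -> bool) -> Prop,
        W_subshift X -> ~ sofic X -> ~ strongly_irreducible X ->
        exists n : nat, forall x, X x <-> e n x.
Proof.
  intros [e He].
  set (T := fun k : nat => if Nat.even k then
     (if excluded_middle_informative (e (Nat.div2 k) (xg (6 * Z.of_nat k * Z.of_nat k + 3)))
      then false else true) else true).
  assert (Hinf : forall M, exists n:nat, (M <= n)%nat /\ T n = true).
  { intro M. exists (2*M+1)%nat. split. lia. unfold T. rewrite Nat.even_odd. reflexivity. }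
  destruct (He (XT T) (XT_W T) (XT_notsofic T Hinf) (XT_notSI T)) as [n Hn].
  specialize (Hn (xg (6 * Z.of_nat (2*n) * Z.of_nat (2*n) + 3))).
  rewrite XT_xg, Sg_diag in Hn by lia.
  unfold T in Hn. rewrite Nat.even_even, Nat.div2_double in Hn.
  destruct (excluded_middle_informative _) as [H|H]; [apply Hn in H; discriminate|].
  apply H, Hn; reflexivity.
Qed.
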